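(* Let $X,Y\in\Sigma^*$ and positions $i\le j$ and $i'\le j'$ in $[0,|Y|]$. Let $\mathcal{A}$ be an alignment of $X$ onto $Y[i\,.\,.\,j)$ and $\mathcal{A}'$ an alignment of $X$ onto $Y[i'\,.\,.\,j')$. If $\mathcal{A}$ and $\mathcal{A}'$, viewed as paths in the alignment graph of $X$ and $Y$, do not contain any common diagonal edge, then $\mathrm{selfed}(X)\le|i-i'|+\mathrm{ed}_{\mathcal{A}}(X,Y[i\,.\,.\,j))+\mathrm{ed}_{\mathcal{A}'}(X,Y[i'\,.\,.\,j'))+|j-j'|$.
   Context: $Y[i\,.\,.\,j)$ is the fragment $Y[i]\cdots Y[j-1]$. An alignment of $X$ onto $Y[i\,.\,.\,j)$ is a path in the grid graph on $[0,|X|]\times[0,|Y|]$ from $(0,i)$ to $(|X|,j)$ using steps $(1,0)$, $(0,1)$, $(1,1)$; the steps $(x,y)\to(x+1,y+1)$ are diagonal edges. Its unweighted cost counts steps $(1,0)$, $(0,1)$, and diagonal steps $(x,y)\to(x+1,y+1)$ with $X[x]\ne Y[y]$. A self-alignment of $X$ is an alignment of $X$ onto $X$ with no edge $(x,x)\to(x+1,x+1)$; $\mathrm{selfed}(X)$ is the minimum unweighted cost of a self-alignment. *)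

(* Defs.v *)
From Stdlib Require Import ClassicalEpsilon.
From mathcomp Require Import all_boot.
Set Implicit Arguments. Unset Strict Implicit. Unset Printing Implicit Defensive.

(* Grid points (x, y) of the alignment graph of X and Y: x in [0,|X|], y in [0,|Y|]. *)
Definition point := (nat * nat)%type.

Definition is_diag (u v : point) : bool := v == (u.1.+1, u.2.+1).
Definition step (u v : point) : bool :=
  [|| v == (u.1.+1, u.2), v == (u.1, u.2.+1) | is_diag u v].

Definition alignment (T : eqType) (X Y : seq T) (i j : nat) (A : seq point) : bool :=
  if A is a :: p then [&& a == (0, i), path step a p & last a p == (size X, j)]
  else false.

Definition edge_cost (T : eqType) (X Y : seq T) (u v : point) : nat :=
  if is_diag u v then (onth X u.1 != onth Y u.2 : nat) else 1.

Definition cost (T : eqType) (X Y : seq T) (A : seq point) : nat :=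
  if A is a :: p then sumn (pairmap (edge_cost X Y) a p) else 0.

Definition diag_edges (A : seq point) : seq (point * point) :=
  if A is a :: p then [seq e <- pairmap (@pair point point) a p | is_diag e.1 e.2] else [::].

Definition self_alignment (T : eqType) (X : seq T) (A : seq point) : bool :=
  alignment X X 0 (size X) A &&
  (if A is a :: p then path (fun u v => ~~ (is_diag u v && (u.1 == u.2))) a p else false).

(* A self-alignment always exists (go right |X| times, then up |X| times). *)
Definition hv (u v : point) : bool := (v == (u.1.+1, u.2)) || (v == (u.1, u.2.+1)).

Lemma hpath (m n : nat) : path hv (m, 0) [seq (k, 0) | k <- iota m.+1 n].
Proof. by elim: n m => //= n IH m; rewrite /hv /= eqxx IH. Qed.

Lemma vpath (c m n : nat) : path hv (c, m) [seq (c, k) | k <- iota m.+1 n].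
Proof. by elim: n m => //= n IH m; rewrite /hv /= eqxx orbT IH. Qed.

Lemma hlast (m n : nat) : last (m, 0) [seq (k, 0) | k <- iota m.+1 n] = (m + n, 0).
Proof. by elim: n m => [|n IH] m /=; rewrite ?addn0 // IH addSnnS. Qed.

Lemma vlast (c m n : nat) : last (c, m) [seq (c, k) | k <- iota m.+1 n] = (c, m + n).
Proof. by elim: n m => [|n IH] m /=; rewrite ?addn0 // IH addSnnS. Qed.

Lemma self_alignment_exists (T : eqType) (X : seq T) :
  exists A, self_alignment X A.
Proof.
set n := size X.
exists ((0, 0) :: [seq (k, 0) | k <- iota 1 n] ++ [seq (n, k) | k <- iota 1 n]).
have H : path hv (0, 0) ([seq (k, 0) | k <- iota 1 n] ++ [seq (n, k) | k <- iota 1 n]).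
  by rewrite cat_path hpath hlast add0n vpath.
rewrite /self_alignment /alignment /=.
apply/andP; split; first (apply/andP; split).
- apply: sub_path H => u v /orP [] /eqP -> ; by rewrite /step ?eqxx //= orbT.
- by rewrite last_cat hlast add0n vlast add0n.
- apply: sub_path H => u v /orP [] /eqP ->; rewrite /is_diag /= xpair_eqE.
  + by case: u => a b /=; rewrite eqxx (ltn_eqF (ltnSn b)).
  + by case: u => a b /=; rewrite (ltn_eqF (ltnSn a)).
Qed.

Definition has_self_alignment_of_cost (T : eqType) (X : seq T) (c : nat) : bool :=
  if excluded_middle_informative (exists A, self_alignment X A /\ cost X X A = c)
  then true else false.

Lemma has_self_alignment_ex (T : eqType) (X : seq T) :
  exists c, has_self_alignment_of_cost X c.
Proof.
have [A HA] := self_alignment_exists X.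
exists (cost X X A); rewrite /has_self_alignment_of_cost.
by case: excluded_middle_informative => // [[]]; exists A.
Qed.

Definition selfed (T : eqType) (X : seq T) : nat :=
  ex_minn (has_self_alignment_ex X).

(* Main.v *)
Require Import Defs.
From mathcomp Require Import all_boot.
From mathcomp Require Import zify.
From Stdlib Require Import ClassicalEpsilon.
Set Implicit Arguments. Unset Strict Implicit. Unset Printing Implicit Defensive.

Definition good (u v : point) : bool := step u v && ~~ (is_diag u v && (u.1 == u.2)).

Definition reach (T : eqType) (X : seq T) (u v : point) (c : nat) : Prop :=
  exists s, [&& path good u s, last u s == v & sumn (pairmap (edge_cost X X) u s) <= c].

Lemma reach_refl (T : eqType) (X : seq T) u : reach X u u 0.
Proof. by exists [::]; rewrite /= eqxx. Qed.

Lemma reach_le (T : eqType) (X : seq T) u v c c' : reach X u v c -> c <= c' -> reach X u v c'.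
Proof.
move=> [s /and3P [H1 H2 H3]] Hc; exists s; rewrite H1 H2 /=; exact: leq_trans H3 Hc.
Qed.


Lemma reach_cons (T : eqType) (X : seq T) u w v c :
  good u w -> reach X w v c -> reach X u v (edge_cost X X u w + c).
Proof.
move=> Hg [s /and3P [H1 H2 H3]]; exists (w :: s); rewrite /= Hg H1 H2 /=.
by rewrite leq_add2l.
Qed.


Lemma hgood (x y : nat) : good (x, y) (x.+1, y).
Proof. rewrite /good /step /is_diag /= !xpair_eqE; lia. Qed.

Lemma vgood (x y : nat) : good (x, y) (x, y.+1).
Proof. rewrite /good /step /is_diag /= !xpair_eqE; lia. Qed.

Lemma hcost (T : eqType) (X Y : seq T) (x y : nat) : edge_cost X Y (x, y) (x.+1, y) = 1.
Proof. rewrite /edge_cost /is_diag /= xpair_eqE; case: ifP => //; lia. Qed.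

Lemma vcost (T : eqType) (X Y : seq T) (x y : nat) : edge_cost X Y (x, y) (x, y.+1) = 1.
Proof. rewrite /edge_cost /is_diag /= xpair_eqE; case: ifP => //; lia. Qed.

Lemma dcost (T : eqType) (X Y : seq T) (x y : nat) :
  edge_cost X Y (x, y) (x.+1, y.+1) = (onth X x != onth Y y).
Proof. by rewrite /edge_cost /is_diag /= eqxx. Qed.

Lemma reach_v (T : eqType) (X : seq T) a b k : reach X (a, b) (a, b + k) k.
Proof.
elim: k b => [|k IH] b; first by rewrite addn0; apply: reach_refl.
have := reach_cons (vgood a b) (IH b.+1); rewrite vcost addSnnS; apply.
Qed.


Lemma reach_h (T : eqType) (X : seq T) a b k : reach X (a, b) (a + k, b) k.
Proof.
elim: k a => [|k IH] a; first by rewrite addn0; apply: reach_refl.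
have := reach_cons (hgood a b) (IH a.+1); rewrite hcost addSnnS; apply.
Qed.


Definition cst (T : eqType) (X Y : seq T) (u : point) (p : seq point) :=
  sumn (pairmap (edge_cost X Y) u p).

Definition Dg (u : point) (p : seq point) :=
  [seq e <- pairmap (@pair point point) u p | is_diag e.1 e.2].

Lemma xbound (T : eqType) (X Y : seq T) u p : path step u p ->
  [/\ u.1 <= (last u p).1, u.2 <= (last u p).2 &
      (last u p).1 - u.1 <= cst X Y u p + ((last u p).2 - u.2)].
Proof.
elim: p u => [|v p IH] [x y] /=; first by rewrite !subnn.
move=> /andP [Hs Hp]; have [] := IH _ Hp.
rewrite /cst /=.
move: Hs; rewrite /step /is_diag /=.
case/or3P => /eqP ->; rewrite /= ?hcost ?vcost ?dcost /=.
all: move=> *; split; lia.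
Qed.

Definition PP (T : eqType) (X Y : seq T) u p u' p' :=
  reach X (u.1, u'.1) ((last u p).1, (last u' p').1)
    (((u.2 - u'.2) + (u'.2 - u.2)) + cst X Y u p + cst X Y u' p' +
     (((last u p).2 - (last u' p').2) + ((last u' p').2 - (last u p).2))).

Lemma advL_h (T : eqType) (X Y : seq T) x y q u' p' :
  PP X Y (x.+1, y) q u' p' -> PP X Y (x, y) ((x.+1, y) :: q) u' p'.
Proof.
rewrite /PP /cst /= hcost => H; have := reach_cons (hgood x u'.1) H.
rewrite hcost => H'; apply: reach_le H' _; lia.
Qed.

Lemma advL_v (T : eqType) (X Y : seq T) x y q u' p' :
  PP X Y (x, y.+1) q u' p' -> PP X Y (x, y) ((x, y.+1) :: q) u' p'.
Proof.
rewrite /PP /cst /= vcost => H; apply: reach_le H _; lia.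
Qed.

Lemma advL_d (T : eqType) (X Y : seq T) x y q u' p' : y < u'.2 ->
  PP X Y (x.+1, y.+1) q u' p' -> PP X Y (x, y) ((x.+1, y.+1) :: q) u' p'.
Proof.
rewrite /PP /cst /= dcost => Hy H; have := reach_cons (hgood x u'.1) H.
rewrite hcost => H'; apply: reach_le H' _; lia.
Qed.

Lemma advR_h (T : eqType) (X Y : seq T) x y q u p :
  PP X Y u p (x.+1, y) q -> PP X Y u p (x, y) ((x.+1, y) :: q).
Proof.
rewrite /PP /cst /= hcost => H; have := reach_cons (vgood u.1 x) H.
rewrite vcost => H'; apply: reach_le H' _; lia.
Qed.

Lemma advR_v (T : eqType) (X Y : seq T) x y q u p :
  PP X Y u p (x, y.+1) q -> PP X Y u p (x, y) ((x, y.+1) :: q).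
Proof.
rewrite /PP /cst /= vcost => H; apply: reach_le H _; lia.
Qed.

Lemma advR_d (T : eqType) (X Y : seq T) x y q u p : y < u.2 ->
  PP X Y u p (x.+1, y.+1) q -> PP X Y u p (x, y) ((x.+1, y.+1) :: q).
Proof.
rewrite /PP /cst /= dcost => Hy H; have := reach_cons (vgood u.1 x) H.
rewrite vcost => H'; apply: reach_le H' _; lia.
Qed.

Lemma tri (T : eqType) (a b c : T) : ((a != b) : nat) <= (a != c) + (b != c).
Proof.
case: (a =P c) => [->|_]; case: (b =P c) => [->|_] /=; rewrite ?eqxx //=; by case: (_ != _).
Qed.

Lemma adv_d (T : eqType) (X Y : seq T) x y x' q q' : x != x' ->
  PP X Y (x.+1, y.+1) q (x'.+1, y.+1) q' ->
  PP X Y (x, y) ((x.+1, y.+1) :: q) (x', y) ((x'.+1, y.+1) :: q').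
Proof.
rewrite /PP /cst /= !dcost => Hx H.
have Hg : good (x, x') (x.+1, x'.+1) by rewrite /good /step /is_diag /= eqxx !orbT /= Hx.
have := reach_cons Hg H; rewrite dcost => H'; apply: reach_le H' _.
have := tri (onth X x) (onth X x') (onth Y y); lia.
Qed.

Lemma base_l (T : eqType) (X Y : seq T) x y u' p' :
  path step u' p' -> PP X Y (x, y) [::] u' p'.
Proof.
move=> /(xbound X Y) [H1 H2 H3]; rewrite /PP /=.
have := reach_v X x u'.1 ((last u' p').1 - u'.1); rewrite subnKC // => H.
apply: reach_le H _; rewrite /cst /= in H3 *; move: H1 H2 H3; case: (last _ _) => l1 l2; case: u' => u1 u2 /=; lia.
Qed.

Lemma base_r (T : eqType) (X Y : seq T) x y u p :
  path step u p -> PP X Y u p (x, y) [::].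
Proof.
move=> /(xbound X Y) [H1 H2 H3]; rewrite /PP /=.
have := reach_h X u.1 x ((last u p).1 - u.1); rewrite subnKC // => H.
apply: reach_le H _; rewrite /cst /= in H3 *; move: H1 H2 H3; case: (last _ _) => l1 l2; case: u => u1 u2 /=; lia.
Qed.

Lemma Dg_sub u v q : {subset Dg v q <= Dg u (v :: q)}.
Proof. by move=> e; rewrite /Dg /=; case: ifP => // _; rewrite inE => ->; rewrite orbT. Qed.

Lemma Dg_diag u v q : is_diag u v -> (u, v) \in Dg u (v :: q).
Proof. by rewrite /Dg /= => ->; rewrite inE eqxx. Qed.

Lemma main (T : eqType) (X Y : seq T) n : forall u p u' p',
  size p + size p' <= n -> path step u p -> path step u' p' ->
  (forall e, e \in Dg u p -> e \notin Dg u' p') -> PP X Y u p u' p'.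
Proof.
elim: n => [|n IH] [x y] [|[a b] q] [x' y'] [|[a' b'] q'] //=;
  try (by move=> _ _ Hp' _; apply: base_l); try (by move=> _ Hp _ _; apply: base_r).
move=> Hn Hpa Hpa' HD; move: (Hpa) (Hpa') => /andP[Hs Hp] /andP[Hs' Hp'].
have HDl : forall e, e \in Dg (a, b) q -> e \notin Dg (x', y') ((a', b') :: q').
  by move=> e He; apply: HD; apply: Dg_sub.
have HDr : forall e, e \in Dg (x, y) ((a, b) :: q) -> e \notin Dg (a', b') q'.
  by move=> e He; apply/negP => He'; have := HD e He; rewrite (Dg_sub (x', y') He').
have Hn1 : size q + (size q').+1 <= n by move: Hn => /=; clear; lia.
have Hn2 : (size q).+1 + size q' <= n by move: Hn => /=; clear; lia.
case: (ltngtP y y') => Hy.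
- move: Hs; rewrite /step /is_diag /= => /or3P [] /eqP [] ? ?; subst;
  [apply: advL_h | apply: advL_v | apply: advL_d => //]; exact: IH.
- move: Hs'; rewrite /step /is_diag /= => /or3P [] /eqP [] ? ?; subst;
  [apply: advR_h | apply: advR_v | apply: advR_d => //]; exact: IH.
- subst y'.
  move: Hs; rewrite /step /is_diag /= => /or3P [] /eqP [] ? ?; subst;
    [apply: advL_h; exact: IH | apply: advL_v; exact: IH |].
  move: Hs'; rewrite /step /is_diag /= => /or3P [] /eqP [] ? ?; subst;
    [apply: advR_h; exact: IH | apply: advR_v; exact: IH |].
  apply: adv_d; last first.
    apply: IH => //; first by move: Hn => /=; clear; lia.
    by move=> e He; apply/negP => He'; have := HD e (Dg_sub (x, y) He); rewrite (Dg_sub (x', y) He').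
  apply/negP => /eqP Ex; subst x'.
  have Hd : is_diag (x, y) (x.+1, y.+1) by rewrite /is_diag /= eqxx.
  have := HD _ (Dg_diag q Hd).
  by move/negP; apply; apply: Dg_diag.
Qed.

Lemma selfed_le (T : eqType) (X : seq T) c : reach X (0, 0) (size X, size X) c -> selfed X <= c.
Proof.
move=> [s /and3P [H1 H2 H3]].
have HS : self_alignment X ((0, 0) :: s).
  rewrite /self_alignment /alignment eqxx H2 /=.
  apply/andP; split; first rewrite andbT.
    by apply: sub_path H1 => u v /andP [].
  by apply: sub_path H1 => u v /andP [].
have Hc : has_self_alignment_of_cost X (cost X X ((0, 0) :: s)).
  rewrite /has_self_alignment_of_cost; case: excluded_middle_informative => // [[]].
  by exists ((0, 0) :: s).
rewrite /selfed; case: ex_minnP => m _ Hmin.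
exact: leq_trans (Hmin _ Hc) H3.
Qed.

Theorem lemma4p4 (T : eqType) (X Y : seq T) (i j i' j' : nat) (A A' : seq point) :
  i <= j -> j <= size Y -> i' <= j' -> j' <= size Y ->
  alignment X Y i j A -> alignment X Y i' j' A' ->
  (forall e, e \in diag_edges A -> e \notin diag_edges A') ->
  selfed X <= ((i - i') + (i' - i)) + cost X Y A + cost X Y A' + ((j - j') + (j' - j)).
Proof.
move=> _ _ _ _; case: A => [|a p] //; case: A' => [|a' p'] //=.
move=> /and3P [/eqP Ea Hp /eqP La] /and3P [/eqP Ea' Hp' /eqP La'] HD.
have := main X Y (leqnn (size p + size p')) Hp Hp' HD.
rewrite /PP La La' Ea Ea' /= => H.
exact: selfed_le H.
Qed.
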